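(* Let $k \geq 3$ be an odd integer. Any non-reducible partial $k$-star design of order $3k+1$ with four stars is completable.
   Context: A $k$-star is a copy of $K_{1,k}$; its vertex of degree $k$ is the centre and the others are leaves. A partial $k$-star design of order $n$ is a pair $(V,\mathcal{A})$ where $V$ is a set of $n$ vertices and $\mathcal{A}$ is a set of edge-disjoint $k$-stars that are subgraphs of the complete graph $K_V$; it is completable if there is a set $\mathcal{B}\supseteq\mathcal{A}$ of edge-disjoint $k$-stars in $K_V$ covering all edges of $K_V$. Let \[u(n,k)= \begin{cases} 2 \lfloor \frac{n-2}{k} \rfloor-1 & \text{if $n \not \equiv 1\pmod{k}$},\\ \frac{2(n-1)}{k} - 2 & \text{if $n \equiv 1\pmod{k}$.} \end{cases} \] A partial $k$-star design $(V,\mathcal{A})$ of order $n$ is reducible if $n \equiv 1 \pmod{k}$, $|\mathcal{A}|=u(n,k)$, and there is a vertex which is the centre of at least one star in $\mathcal{A}$ and is not a leaf of any star in $\mathcal{A}$; otherwise it is non-reducible. *)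

(* Defs.v *)
From mathcomp Require Import all_boot all_order all_algebra.
Set Implicit Arguments. Unset Strict Implicit. Unset Printing Implicit Defensive.

(* Vertices: an arbitrary finite type T (so the order is n = #|T|).
   A k-star is represented by a pair (c, L) : centre c and leaf set L,
   with #|L| = k and c \notin L. *)

Definition star (T : finType) := (T * {set T})%type.

Definition centre (T : finType) (s : star T) : T := s.1.
Definition leaves (T : finType) (s : star T) : {set T} := s.2.

Definition is_kstar (T : finType) (k : nat) (s : star T) : bool :=
  (#|leaves s| == k) && (centre s \notin leaves s).

Definition star_edges (T : finType) (s : star T) : {set {set T}} :=
  [set [set centre s; l] | l in leaves s].

Definition partial_star_design (T : finType) (k : nat) (A : {set star T}) : Prop :=
  (forall s, s \in A -> is_kstar k s) /\
  (forall s t, s \in A -> t \in A -> s != t ->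
     [disjoint star_edges s & star_edges t]).

Definition completable (T : finType) (k : nat) (A : {set star T}) : Prop :=
  exists B : {set star T},
    A \subset B /\ partial_star_design k B /\
    (forall x y : T, x != y -> exists2 s, s \in B & [set x; y] \in star_edges s).

Definition u (n k : nat) : int :=
  if n %% k != 1 %% k then (Posz (2 * ((n - 2) %/ k)) - 1)%R
  else (Posz (2 * (n - 1) %/ k) - 2)%R.

Definition reducible (T : finType) (k : nat) (A : {set star T}) : Prop :=
  [/\ #|T| = 1 %[mod k], Posz #|A| = u #|T| k &
      exists v : T, (exists2 s, s \in A & centre s = v) /\
                    (forall s, s \in A -> v \notin leaves s)].

(* Main.v *)
Require Import Defs.
From mathcomp Require Import all_boot all_order all_algebra.
From mathcomp Require Import zify.
Set Implicit Arguments. Unset Strict Implicit. Unset Printing Implicit Defensive.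


Section Hakimi.
Variable T : finType.

Definition ltr (x y : T) : bool := (nat_of_ord (enum_rank x) < nat_of_ord (enum_rank y))%N.

Lemma ltr_irr x : ltr x x = false.
Proof. by rewrite /ltr ltnn. Qed.

Lemma ltr_asym x y : ltr x y -> ltr y x = false.
Proof. by rewrite /ltr => h; apply/negbTE; rewrite -leqNgt ltnW. Qed.

Lemma ltr_total x y : x != y -> ltr x y || ltr y x.
Proof.
move=> nxy; rewrite /ltr -neq_ltn; apply: contra nxy => /eqP h.
by apply/eqP; apply: enum_rank_inj; apply: val_inj.
Qed.

Definition eS (adj : rel T) (S : {set T}) : nat :=
  \sum_x \sum_y ((x \in S) && (y \in S) && adj x y && ltr x y : nat).
Definition oS (o : T -> nat) (S : {set T}) : nat := \sum_(x in S) o x.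

Lemma sum_eq1 (F : T -> nat) w : \sum_x ((x == w) * F x) = F w.
Proof.
rewrite (bigD1 w) //= eqxx mul1n big1 ?addn0 // => x /negbTE ->; by rewrite mul0n.
Qed.

Lemma sum_pair (F : T -> T -> nat) u v :
  \sum_x \sum_y (((x == u) && (y == v)) * F x y) = F u v.
Proof.
rewrite -(sum_eq1 (fun x => F x v) u); apply: eq_bigr => x _.
rewrite -(sum_eq1 (fun y => F x y) v) big_distrr /=; apply: eq_bigr => y _.
by case: (x == u); case: (y == v); rewrite /= ?mul0n ?mul1n ?muln0 ?muln1.
Qed.

Lemma eS_submod (adj : rel T) (S1 S2 : {set T}) u v : adj u v -> ltr u v -> u \in S1 -> v \notin S1 ->
  v \in S2 -> u \notin S2 ->
  eS adj S1 + eS adj S2 + 1 <= eS adj (S1 :|: S2) + eS adj (S1 :&: S2).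
Proof.
move=> huv luv u1 v1 v2 u2.
have -> : 1 = \sum_x \sum_y (((x == u) && (y == v)) * 1) by rewrite sum_pair.
rewrite /eS -!big_split /=; apply: leq_sum => x _.
rewrite -!big_split /=; apply: leq_sum => y _.
case E: ((x == u) && (y == v)).
  move/andP: E => [/eqP -> /eqP ->]; rewrite !inE huv luv u1 (negbTE v1) v2 (negbTE u2).
  by [].
rewrite muln1 addn0 !inE.
by case: (x \in S1); case: (x \in S2); case: (y \in S1); case: (y \in S2);
   case: (adj x y); case: (ltr x y).
Qed.

Lemma oS_mod (o : T -> nat) (S1 S2 : {set T}) : oS o (S1 :|: S2) + oS o (S1 :&: S2) = oS o S1 + oS o S2.
Proof.
rewrite /oS !(big_mkcond (fun x => x \in _)) -!big_split; apply: eq_bigr => x _.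
by rewrite !inE; case: (x \in S1); case: (x \in S2); rewrite /= ?addn0 ?add0n // addnC.
Qed.

Definition good (adj : rel T) (o : T -> nat) (w wp : T) := [forall S : {set T},
  eS adj S + (w \in S) <= oS o S + ((w \in S) && (wp \in S))].

Lemma good_or (adj : rel T) (o : T -> nat) u v : adj u v -> ltr u v -> (forall S, eS adj S <= oS o S) ->
  good adj o u v || good adj o v u.
Proof.
move=> huv luv hS; apply/negPn/negP => /norP [/forallPn [S1 hS1] /forallPn [S2 hS2]].
rewrite -ltnNge in hS1; rewrite -ltnNge in hS2.
have h1 := hS S1; have h2 := hS S2.
case u1: (u \in S1) hS1; case v1: (v \in S1) => /= e1; try lia.
case v2: (v \in S2) hS2; case u2: (u \in S2) => /= e2; try lia.
have := eS_submod huv luv u1 (negbT v1) v2 (negbT u2).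
have := hS (S1 :|: S2); have := hS (S1 :&: S2); have := oS_mod o S1 S2.
lia.
Qed.


Lemma eS_pos (adj : rel T) (S : {set T}) x y : adj x y -> ltr x y -> x \in S -> y \in S -> 0 < eS adj S.
Proof.
move=> hxy lxy xS yS; rewrite /eS (bigD1 x) //= (bigD1 y) //= xS yS hxy lxy /=.
by rewrite add1n.
Qed.

Lemma sum_and_eq (b : bool) (v : T) : \sum_(y : T) ((b && (y == v)) : nat) = b.
Proof.
rewrite -(sum_eq1 (fun _ => b) v); apply: eq_bigr => y _.
by case: b; case: (y == v).
Qed.

Lemma hakimi n : forall (adj : rel T) (o : T -> nat), symmetric adj -> irreflexive adj ->
  eS adj setT = n -> oS o setT = n -> (forall S, eS adj S <= oS o S) ->
  exists D : rel T, [/\ forall x y, D x y -> adj x y,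
     forall x y, adj x y -> D x y || D y x,
     forall x y, D x y -> ~~ D y x & forall x, \sum_y (D x y : nat) = o x].
Proof.
elim: n => [|n IH] adj o sym irr hE hO hS.
  have noadj : forall x y, adj x y = false.
    move=> x y; apply/negbTE/negP => hxy.
    have nxy : x != y by apply: contraTneq hxy => ->; rewrite irr.
    case/orP: (ltr_total nxy) => l.
      by have := eS_pos (S := setT) hxy l (in_setT _) (in_setT _); rewrite hE.
    rewrite sym in hxy.
    by have := eS_pos (S := setT) hxy l (in_setT _) (in_setT _); rewrite hE.
  have o0 : forall x, o x = 0.
    move=> x; move: hO; rewrite /oS (bigD1 x) ?inE //=; lia.
  exists (fun _ _ => false); split => //.
  - by move=> x y; rewrite noadj.
  - by move=> x; rewrite big1 ?o0.
have [u [v /andP [huv luv]]] : exists u v, adj u v && ltr u v.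
  case: (boolP [exists x, exists y, adj x y && ltr x y]).
    by move=> /existsP [x /existsP [y h]]; exists x, y.
  move=> /existsPn hn; move: hE; rewrite /eS big1 // => x _; rewrite big1 // => y _.
  by rewrite !inE /=; have := hn x => /existsPn /(_ y) /negbTE ->.
have nuv : u != v by apply: contraTneq huv => ->; rewrite irr.
have step : forall w wp, (w == u) && (wp == v) || (w == v) && (wp == u) ->
    good adj o w wp -> exists D : rel T, [/\ forall x y, D x y -> adj x y,
     forall x y, adj x y -> D x y || D y x,
     forall x y, D x y -> ~~ D y x & forall x, \sum_y (D x y : nat) = o x].
  move=> w wp hw /forallP g.
  pose spec x y := (x == u) && (y == v) || (x == v) && (y == u).
  pose adj' x y := adj x y && ~~ spec x y.
  pose o' x := o x - (x == w).
  have sym' : symmetric adj'.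
    move=> x y; rewrite /adj' /spec sym; congr (_ && ~~ _).
    by rewrite orbC andbC (andbC (y == v)).
  have irr' : irreflexive adj' by move=> x; rewrite /adj' irr.
  have hsl : forall x y, spec x y && ltr x y = (x == u) && (y == v).
    move=> x y; rewrite /spec andb_orl.
    have -> : (x == v) && (y == u) && ltr x y = false.
      apply/negbTE; apply/negP => /andP [/andP [/eqP -> /eqP ->]].
      by rewrite (ltr_asym luv).
    rewrite orbF; case: (x =P u) => [->|_]; case: (y =P v) => [->|_];
      by rewrite ?eqxx ?luv ?andbF.
  have specC : forall x y, spec y x = spec x y.
    by move=> x y; rewrite /spec; case: (x == u); case: (x == v); case: (y == u); case: (y == v).
  have hwS : forall S : {set T}, (w \in S) && (wp \in S) = (u \in S) && (v \in S).
    by move=> S; case/orP: hw => /andP [/eqP ? /eqP ?]; subst => //; rewrite andbC.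
  have hwsp : forall x y, spec x y = (x == w) && (y == wp) || (x == wp) && (y == w).
    move=> x y; rewrite /spec.
    by case/orP: hw => /andP [/eqP ? /eqP ?]; subst => //; rewrite orbC.
  have eSd : forall S, eS adj S = eS adj' S + ((u \in S) && (v \in S)).
    move=> S.
    have -> : ((u \in S) && (v \in S) : nat) =
      \sum_x \sum_y (((x == u) && (y == v)) * ((x \in S) && (y \in S))).
      by rewrite sum_pair.
    rewrite /eS -big_split; apply: eq_bigr => x _; rewrite -big_split; apply: eq_bigr => y _ /=.
    rewrite /adj'; case E: ((x == u) && (y == v)).
      move/andP: E => [/eqP -> /eqP ->]; rewrite huv luv /spec !eqxx /= andbF.
      by case: (u \in S); case: (v \in S).
    have hs := hsl x y; rewrite E in hs.
    rewrite mul0n addn0; move: hs.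
    by case: (x \in S); case: (y \in S); case: (adj x y); case: (spec x y); case: (ltr x y).


  have ow : 0 < o w.
    have := g [set w]; rewrite /oS big_set1 !inE eqxx /=.
    have -> : (wp == w) = false.
      by case/orP: hw => /andP [/eqP ? /eqP ?]; subst; rewrite ?(negbTE nuv) // eq_sym (negbTE nuv).
    lia.
  have oSd : forall S, oS o S = oS o' S + (w \in S).
    move=> S; rewrite /oS.
    have -> : ((w \in S) : nat) = \sum_(x in S) (x == w : nat).
      rewrite big_mkcond /= -(sum_eq1 (fun x => (x \in S) : nat) w).
      by apply: eq_bigr => x _; case: (x \in S); case: (x == w).
    rewrite -big_split; apply: eq_bigr => x _ /=; rewrite /o'.
    by case: (x =P w) => [->|_] /=; lia.
  have hS' : forall S, eS adj' S <= oS o' S.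
    move=> S; have := g S; rewrite eSd oSd hwS.
    by case: (u \in S); case: (v \in S); case: (w \in S) => /=; lia.
  have hE' : eS adj' setT = n by move: hE; rewrite eSd !inE /=; lia.
  have hO' : oS o' setT = n by move: hO; rewrite oSd !inE /=; lia.
  have [D' [D1 D2 D3 D4]] := IH adj' o' sym' irr' hE' hO' hS'.
  exists (fun x y => if spec x y then x == w else D' x y); split.
  - move=> x y; case E: (spec x y).
      move: E; rewrite /spec => /orP [] /andP [/eqP -> /eqP ->] _ //.
      by rewrite sym.
    by move/D1; rewrite /adj' => /andP [].
  - move=> x y hxy; have Es := specC x y.
    rewrite Es; case E: (spec x y).
      by move: E; rewrite hwsp => /orP [] /andP [/eqP -> /eqP ->]; rewrite eqxx ?orbT.
    by apply: D2; rewrite /adj' hxy E.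
  - move=> x y; have Es := specC x y.
    rewrite Es; case E: (spec x y).
      move=> /eqP xw; subst x; apply/negP => /eqP yw; subst y.
      move: E; rewrite /spec (andbC (w == v)) orbb => /andP [/eqP h1 /eqP h2].
      by rewrite -h1 h2 eqxx in nuv.
    exact: D3.
  - move=> x; have -> : o x = o' x + (x == w).
      by rewrite /o'; case: (x =P w) => [->|_] /=; lia.
    rewrite -(D4 x).
    have -> : \sum_y ((if spec x y then x == w else D' x y) : nat) =
        \sum_y (D' x y : nat) + \sum_y (spec x y && (x == w) : nat).
      rewrite -big_split; apply: eq_bigr => y _ /=.
      case E: (spec x y) => /=; last by rewrite addn0.
      have -> : D' x y = false.
        by apply/negbTE/negP => /D1; rewrite /adj' E andbF.
      by [].
    have -> : \sum_y (spec x y && (x == w) : nat) = (x == w).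
      case: (x =P w) => [->|nxw]; last first.
        by rewrite big1 // => y _; rewrite andbF.
      rewrite -(sum_and_eq true wp); apply: eq_bigr => y _.
      rewrite andbT hwsp eqxx /=.
      have -> : (w == wp) = false.
        by case/orP: hw => /andP [/eqP ? /eqP ?]; subst; rewrite ?(negbTE nuv) // eq_sym (negbTE nuv).
      by rewrite orbF.
    by [].
have := good_or huv luv hS; case/orP => g.
  by apply: (step u v) => //; rewrite !eqxx.
by apply: (step v u) => //; rewrite !eqxx orbT.
Qed.

End Hakimi.


Lemma subset_card (T : finType) (N : {set T}) j : j <= #|N| ->
  exists K : {set T}, K \subset N /\ #|K| = j.
Proof.
elim: j => [|j IH] hj; first by exists set0; rewrite sub0set cards0.
have [K [KN cK]] := IH (ltnW hj).
have : K \proper N by rewrite properEcard KN cK hj.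
case/properP => _ [y yN yK].
exists (y |: K); rewrite subUset sub1set yN KN; split => //.
by rewrite cardsU1 yK cK.
Qed.

Lemma blocks (T : finType) k m : forall (N : {set T}), #|N| = k * m ->
  exists P : {set {set T}}, [/\ forall K, K \in P -> #|K| = k /\ K \subset N,
    forall K K' y, K \in P -> K' \in P -> y \in K -> y \in K' -> K = K' &
    forall y, y \in N -> exists2 K, K \in P & y \in K].
Proof.
elim: m => [|m IH] N hN.
  have N0 : N = set0 by apply/eqP; rewrite -cards_eq0 hN muln0.
  exists set0; split => [K|K K' y|y]; rewrite ?in_set0 ?N0 ?in_set0 //.
have [K0 [K0N cK0]] : exists K0 : {set T}, K0 \subset N /\ #|K0| = k.
  by apply: subset_card; rewrite hN mulnS leq_addr.
have cN' : #|N :\: K0| = k * m.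
  by rewrite cardsD (setIidPr K0N) hN cK0 mulnS addKn.
have [P' [P1 P2 P3]] := IH _ cN'.
exists (K0 |: P'); split.
- move=> K; rewrite in_setU1 => /orP [/eqP -> //|KP].
  have [cK sK] := P1 K KP; split => //.
  by apply: subset_trans sK _; apply: subsetDl.
- move=> K K' y; rewrite !in_setU1 => /orP [/eqP ->|KP] /orP [/eqP ->|K'P] //.
  + move=> yK0 yK'; have [_ sK'] := P1 K' K'P.
    by move: (subsetP sK' y yK'); rewrite inE yK0.
  + move=> yK yK0; have [_ sK] := P1 K KP.
    by move: (subsetP sK y yK); rewrite inE yK0.
  + exact: P2.
- move=> y yN; case: (boolP (y \in K0)) => yK0.
    by exists K0; rewrite ?setU11.
  have yN' : y \in N :\: K0 by rewrite inE yK0 yN.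
  have [K KP yK] := P3 y yN'.
  by exists K; rewrite // in_setU1 KP orbT.
Qed.


Section Counting.
Variable T : finType.

Lemma sum_mem (S : {set T}) : \sum_y ((y \in S) : nat) = #|S|.
Proof.
by rewrite -sum1_card [RHS]big_mkcond /=; apply: eq_bigr => y _; case: (y \in S).
Qed.

Lemma dS_le (adj : rel T) (S : {set T}) x : irreflexive adj -> x \in S ->
  \sum_(y in S) (adj x y : nat) + 1 <= #|S|.
Proof.
move=> irr xS; rewrite -sum1_card (bigD1 x) //= (bigD1 x xS) /= irr add0n addnC leq_add2l.
by apply: leq_sum => y _; case: (adj x y).
Qed.

Lemma eS_double (adj : rel T) (S : {set T}) : symmetric adj -> irreflexive adj ->
  2 * eS adj S = \sum_(x in S) \sum_(y in S) (adj x y : nat).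
Proof.
move=> sym irr.
have -> : \sum_(x in S) \sum_(y in S) (adj x y : nat) =
   \sum_x \sum_y ((x \in S) && (y \in S) && adj x y && ltr x y : nat) +
   \sum_x \sum_y ((x \in S) && (y \in S) && adj x y && ltr y x : nat).
  rewrite -big_split big_mkcond /=; apply: eq_bigr => x _.
  rewrite -big_split /=; case xS: (x \in S); last by rewrite big1 // => y _.
  rewrite big_mkcond /=; apply: eq_bigr => y _.
  case yS: (y \in S) => //=; case hxy: (adj x y) => //=.
  have nxy : x != y by apply: contraTneq hxy => ->; rewrite irr.
  case/orP: (ltr_total nxy) => l; rewrite l ?(ltr_asym l) //.
have -> : \sum_x \sum_y ((x \in S) && (y \in S) && adj x y && ltr y x : nat) = eS adj S.
  rewrite exchange_big /eS; apply: eq_bigr => x _; apply: eq_bigr => y _.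
  by rewrite sym; case: (x \in S); case: (y \in S).
by rewrite /eS mul2n -addnn.
Qed.

Lemma sum_splitz (S : {set T}) (F : T -> nat) z :
  \sum_(x in S) F x = \sum_(x in S) ((x != z) * F x) + (z \in S) * F z.
Proof.
rewrite !(big_mkcond (fun x => x \in S)) (bigD1 z) //= [in RHS](bigD1 z) //= eqxx.
have -> : (if z \in S then ~~ true * F z else 0) = 0 by case: (z \in S).
rewrite add0n addnC; congr (_ + _); last by case: (z \in S); rewrite ?mul1n ?mul0n.
apply: eq_bigr => x /negbTE nxz; rewrite nxz mul1n; by case: (x \in S).
Qed.

Definition deg (adj : rel T) x := \sum_y (adj x y : nat).

Lemma cond_F (adj : rel T) (o : T -> nat) (z : T) (k : nat) :
  symmetric adj -> irreflexive adj -> #|T| = 3 * k + 1 ->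
  2 * oS o setT = \sum_x deg adj x -> o z = 0 ->
  (forall x, x != z -> k <= o x) ->
  (forall x, x != z -> 2 * o x + (k - 1) <= 2 * deg adj x) ->
  forall S, eS adj S <= oS o S.
Proof.
move=> sym irr cT hsum oz ok odeg S.
case: (leqP #|S| (2 * k)) => hS.
  suff : 2 * eS adj S <= 2 * oS o S by rewrite leq_mul2l.
  rewrite eS_double // (sum_splitz _ _ z).
  have -> : (z \in S) * \sum_(y in S) (adj z y : nat) =
      \sum_(x in S) ((x != z) * ((z \in S) * adj x z)).
    rewrite big_distrr /=; apply: eq_bigr => x xS.
    rewrite sym; case: (x =P z) => [->|_]; by rewrite ?irr ?muln0 ?mul0n ?mul1n.
  rewrite -big_split /= /oS big_distrr /=; apply: leq_sum => x xS.
  case: (x =P z) => [->|nxz]; first by rewrite oz.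
  rewrite /= mul1n.
  have := dS_le irr xS; have := ok x (introN eqP nxz).
  case: (z \in S); case: (adj x z); rewrite /= ?muln0 ?muln1; lia.
pose U := ~: S.
have hU : #|U| <= k by rewrite /U; move: (cardsC S); rewrite cT; lia.
pose P (X Y : {set T}) := \sum_(x in X) \sum_(y in Y) (adj x y : nat).
have splitT : forall (F : T -> nat), \sum_x F x = \sum_(x in S) F x + \sum_(x in U) F x.
  move=> F; rewrite (bigID (fun x => x \in S)) /=; congr (_ + _).
  by apply: eq_bigl => x; rewrite /U inE.
have PT : \sum_x deg adj x = P S S + P S U + P U S + P U U.
  rewrite /deg splitT /P !(eq_bigr _ (fun x _ => splitT (fun y => (adj x y : nat)))).
  by rewrite !big_split /= addnA.
have PSU : P S U = P U S.
  rewrite /P exchange_big /=; apply: eq_bigr => x _; apply: eq_bigr => y _; by rewrite sym.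
have degU : \sum_(x in U) deg adj x = P U S + P U U.
  rewrite /P -big_split /=; apply: eq_bigr => x _; by rewrite /deg splitT.
have oST : oS o setT = oS o S + oS o U.
  by rewrite /oS (big_setID S) /= setTI setTD.
have key : 2 * oS o U + P U U <= 2 * \sum_(x in U) deg adj x.
  rewrite /oS /P big_distrr /= big_distrr /= -big_split /=; apply: leq_sum => x xU.
  case: (x =P z) => [->|nxz].
    rewrite oz muln0 add0n; apply: (@leq_trans (deg adj z)); last by lia.
    rewrite /deg (big_mkcond (fun y => y \in U)) /=; apply: leq_sum => y _.
    by case: (y \in U).
  have := dS_le irr xU; have := odeg x (introN eqP nxz); lia.
suff : 2 * eS adj S <= 2 * oS o S by rewrite leq_mul2l.
rewrite eS_double // -/(P S S); lia.
Qed.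

End Counting.


Lemma set2_eq (T : finType) (a b c d : T) : [set a; b] = [set c; d] ->
  (a = c /\ b = d) \/ (a = d /\ b = c).
Proof.
move=> e.
have ha : a \in [set c; d] by rewrite -e set21.
have hb : b \in [set c; d] by rewrite -e set22.
have hc : c \in [set a; b] by rewrite e set21.
have hd : d \in [set a; b] by rewrite e set22.
move: ha hb hc hd; rewrite !inE => /orP[/eqP ac|/eqP ad] /orP[/eqP bc|/eqP bd]
  /orP[/eqP ca|/eqP cb] /orP[/eqP da|/eqP db]; subst; first [by left | by right].
Qed.

Section Stars.
Variables (k : nat) (T : finType) (A : {set star T}).
Hypothesis hA : partial_star_design k A.

Lemma kstarA s : s \in A -> is_kstar k s.
Proof. by case: hA => h _; apply: h. Qed.

Lemma cardL s : s \in A -> #|leaves s| = k.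
Proof. by move/kstarA => /andP [/eqP]. Qed.

Lemma cnotL s : s \in A -> centre s \notin leaves s.
Proof. by move/kstarA => /andP []. Qed.

Lemma mem_edges (s : star T) x y :
  ([set x; y] \in star_edges s) =
  ((x == centre s) && (y \in leaves s)) || ((y == centre s) && (x \in leaves s)).
Proof.
apply/imsetP/orP.
  move=> [l lL e]; case: (set2_eq e) => [[-> ->]|[-> ->]].
    by left; rewrite eqxx lL.
  by right; rewrite eqxx lL.
case=> /andP [/eqP -> yL]; first by exists y.
by exists x => //; rewrite setUC.
Qed.

Lemma shared s t e : s \in A -> t \in A -> e \in star_edges s -> e \in star_edges t -> s = t.
Proof.
move=> sA tA es et; apply/eqP; apply/negPn/negP => nst.
case: hA => _ /(_ s t sA tA nst) /disjointFr /(_ es).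
by rewrite et.
Qed.

Definition AE := \bigcup_(s in A) star_edges s.

Lemma AE_sum e : ((e \in AE) : nat) = \sum_(s in A) ((e \in star_edges s) : nat).
Proof.
case: (boolP (e \in AE)).
  move=> /bigcupP [s0 s0A es0]; rewrite (bigD1 s0) //= es0 big1 //.
  move=> t /andP [tA nts0]; case: (boolP (e \in star_edges t)) => // et.
  by move: nts0; rewrite (shared tA s0A et es0) eqxx.
move=> nAE; rewrite big1 // => s sA; case: (boolP (e \in star_edges s)) => // es.
by move: nAE; rewrite (introT bigcupP) //; exists s.
Qed.

Definition ca x := \sum_(s in A) ((centre s == x) : nat).
Definition cl x := \sum_(s in A) ((x \in leaves s) : nat).
Definition degA x := \sum_y (((y != x) && ([set x; y] \in AE)) : nat).
Definition adjL (x y : T) := (x != y) && ([set x; y] \notin AE).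

Lemma degA_eq x : degA x = k * ca x + cl x.
Proof.
rewrite /degA.
have -> : \sum_y (((y != x) && ([set x; y] \in AE)) : nat) =
    \sum_y \sum_(s in A) (((y != x) && ([set x; y] \in star_edges s)) : nat).
  apply: eq_bigr => y _; case: (y != x); last by rewrite /= big1.
  by rewrite /= AE_sum.
rewrite exchange_big /ca /cl big_distrr -big_split /=; apply: eq_bigr => s sA.
have cL := cnotL sA.
have -> : \sum_y (((y != x) && ([set x; y] \in star_edges s)) : nat) =
    \sum_y (((x == centre s) && (y \in leaves s)) : nat) +
    \sum_y (((y == centre s) && (x \in leaves s)) : nat).
  rewrite -big_split; apply: eq_bigr => y _ /=; rewrite mem_edges.
  case: (x =P centre s) => [->|nxc].
    rewrite (negbTE cL) !andbF orbF addn0 /=.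
    case yL: (y \in leaves s); rewrite ?andbF ?andbT //.
    by case: (y =P centre s) => // e; rewrite -e yL in cL.
  rewrite /= add0n; case: (y =P centre s) => [->|_]; rewrite /= ?andbF //.
  by rewrite eq_sym; move/eqP/negbTE: nxc => ->.
congr (_ + _).
  case: (x =P centre s) => [->|nxc] /=; last by rewrite big1 // (introF eqP (nesym nxc)) muln0.
  by rewrite eqxx muln1 sum_mem cardL.
rewrite -(sum_eq1 (fun _ => (x \in leaves s) : nat) (centre s)).
by apply: eq_bigr => y _; case: (y == centre s); case: (x \in leaves s).
Qed.


Lemma sum_ca : \sum_x ca x = #|A|.
Proof.
rewrite /ca exchange_big /= -sum1_card; apply: eq_bigr => s _.
by rewrite -(sum_eq1 (fun _ => 1) (centre s)); apply: eq_bigr => x _; rewrite muln1 eq_sym.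
Qed.

Lemma sum_cl : \sum_x cl x = k * #|A|.
Proof.
rewrite /cl exchange_big /= -sum1_card big_distrr /=; apply: eq_bigr => s sA.
by rewrite sum_mem cardL // muln1.
Qed.

Lemma ca_cl_le x : ca x + cl x <= #|A|.
Proof.
rewrite /ca /cl -big_split -sum1_card /=; apply: leq_sum => s sA.
have := cnotL sA; case: (centre s =P x) => [->|_] /=; last by case: (x \in leaves s).
by move/negbTE => ->.
Qed.

Lemma adjL_sym : symmetric adjL.
Proof. by move=> x y; rewrite /adjL eq_sym setUC. Qed.

Lemma adjL_irr : irreflexive adjL.
Proof. by move=> x; rewrite /adjL eqxx. Qed.

Lemma degL_eq x : deg adjL x + degA x = #|T|.-1.
Proof.
rewrite /deg /degA -big_split -(cardC1 x) -sum1_card [RHS]big_mkcond /=.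
apply: eq_bigr => y _; rewrite /adjL !inE eq_sym.
by case: (y != x); case: ([set x; y] \in AE).
Qed.

Lemma ca_pos x : 0 < ca x -> exists2 s, s \in A & centre s = x.
Proof.
move=> h; case: (boolP [exists s in A, centre s == x]).
  by move=> /exists_inP [s sA /eqP e]; exists s.
move=> /exists_inPn hn; move: h; rewrite /ca big1 // => s sA.
by rewrite (negbTE (hn s sA)).
Qed.

Lemma cl_pos x : 0 < cl x -> exists2 s, s \in A & x \in leaves s.
Proof.
move=> h; case: (boolP [exists s in A, x \in leaves s]).
  by move=> /exists_inP [s sA e]; exists s.
move=> /exists_inPn hn; move: h; rewrite /cl big1 // => s sA.
by rewrite (negbTE (hn s sA)).
Qed.

Lemma cl_zero x : cl x = 0 -> forall s, s \in A -> x \notin leaves s.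
Proof.
move=> h s sA; apply/negP => xL.
have : 0 < cl x by rewrite /cl (bigD1 s) //= xL.
by rewrite h.
Qed.


Lemma all_one (f : star T -> nat) : (forall s, s \in A -> f s <= 1) ->
  \sum_(s in A) f s = #|A| -> forall s, s \in A -> f s = 1.
Proof.
move=> h1 hs s sA.
have : \sum_(s in A) (1 - f s) = 0.
  have : \sum_(s in A) f s + \sum_(s in A) (1 - f s) = #|A|.
    rewrite -big_split -sum1_card /=; apply: eq_bigr => t tA; have := h1 t tA; lia.
  lia.
move/eqP; rewrite sum_nat_eq0 => /forall_inP /(_ s sA) /eqP; have := h1 s sA; lia.
Qed.

Lemma edge_in (s : star T) l : l \in leaves s -> [set centre s; l] \in star_edges s.
Proof. by move=> lL; apply: imset_f. Qed.

Lemma Fd s t x : s \in A -> t \in A -> x \in leaves s -> x \in leaves t ->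
  centre s = centre t -> s = t.
Proof.
move=> sA tA xs xt e; apply: (shared sA tA (edge_in xs)).
by rewrite e; apply: edge_in.
Qed.

Lemma Fe s t x : s \in A -> t \in A -> x \in leaves s -> centre t = x ->
  centre s \in leaves t -> False.
Proof.
move=> sA tA xs ct cs.
have e1 := edge_in xs.
have e2 : [set centre s; x] \in star_edges t by rewrite setUC -ct; apply: edge_in.
have st := shared sA tA e1 e2; subst t.
by move: (cnotL sA); rewrite ct xs.
Qed.


End Stars.


Section Build.
Variables (k : nat) (T : finType) (A : {set star T}).
Hypothesis hA : partial_star_design k A.

Lemma build (D : rel T) (b : T -> nat) :
  (forall x y, D x y -> adjL A x y) -> (forall x y, adjL A x y -> D x y || D y x) ->
  (forall x y, D x y -> ~~ D y x) -> (forall x, \sum_y (D x y : nat) = k * b x) ->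
  completable k A.
Proof.
move=> D1 D2 D3 D4.
have : forall x, exists P : {set {set T}}, [/\ forall K, K \in P -> #|K| = k /\ K \subset [set y | D x y],
    forall K K' y, K \in P -> K' \in P -> y \in K -> y \in K' -> K = K' &
    forall y, y \in [set y | D x y] -> exists2 K, K \in P & y \in K].
  move=> x; apply: (@blocks T k (b x)); rewrite -D4 -sum_mem; apply: eq_bigr => y _; by rewrite inE.
case/fin_all_exists => P HP.
have Dirr : forall x, D x x = false.
  by move=> x; apply/negbTE/negP => /D1; rewrite adjL_irr.
have newP : forall s : star T, s.2 \in P s.1 -> #|s.2| = k /\ (forall l, l \in s.2 -> D s.1 l).
  move=> s sP; have [P1 _ _] := HP s.1; have [c sub] := P1 _ sP; split => // l ls.
  by move: (subsetP sub l ls); rewrite inE.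
have newE : forall s : star T, s.2 \in P s.1 -> forall e, e \in star_edges s ->
    exists2 l, l \in s.2 & D s.1 l /\ e = [set s.1; l].
  move=> s sP e /imsetP [l ls ->]; exists l => //; split => //; by apply: (newP s sP).2.
exists [set s : star T | (s \in A) || (s.2 \in P s.1)]; split; [|split; [split|]].
- by apply/subsetP => s sA; rewrite inE sA.
- move=> s; rewrite inE => /orP [sA|sP]; first exact: (kstarA hA sA).
  have [c hD] := newP s sP; rewrite /is_kstar c eqxx /=; apply/negP => /hD.
  by rewrite Dirr.
- move=> s t; rewrite !inE => hs ht nst; rewrite -setI_eq0; apply/eqP/setP => e.
  rewrite !inE; apply/negP => /andP [es et].
  case/orP: hs => [sA|sP]; case/orP: ht => [tA|tP].
  + by move: nst; rewrite (shared hA sA tA es et) eqxx.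
  + have [l _ [hl el]] := newE t tP e et.
    have := D1 _ _ hl; rewrite /adjL -el => /andP [_ /negP]; apply.
    by apply/bigcupP; exists s.
  + have [l _ [hl el]] := newE s sP e es.
    have := D1 _ _ hl; rewrite /adjL -el => /andP [_ /negP]; apply.
    by apply/bigcupP; exists t.
  + have [l ls [hl el]] := newE s sP e es; have [l' ls' [hl' el']] := newE t tP e et.
    rewrite el in el'; case: (set2_eq el') => [[e1 e2]|[e1 e2]].
      have [_ P2 _] := HP s.1; rewrite -e1 -e2 in tP ls'.
      have eK := P2 _ _ l sP tP ls ls'.
      by move: nst; rewrite [s]surjective_pairing [t]surjective_pairing e1 eK eqxx.
    by move: (D3 _ _ hl); rewrite e2 e1 hl'.
- move=> x y nxy; case: (boolP ([set x; y] \in AE A)).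
    move=> /bigcupP [s sA es]; exists s => //; by rewrite inE sA.
  move=> nAE; have hxy : adjL A x y by rewrite /adjL nxy nAE.
  case/orP: (D2 _ _ hxy) => hD.
    have [_ _ P3] := HP x; have [K KP yK] := P3 y ltac:(by rewrite inE).
    exists (x, K); first by rewrite inE /= KP orbT.
    by rewrite mem_edges /= eqxx yK.
  have [_ _ P3] := HP y; have [K KP xK] := P3 x ltac:(by rewrite inE).
  exists (y, K); first by rewrite inE /= KP orbT.
  by rewrite mem_edges /= eqxx xK orbT.
Qed.
End Build.


Lemma sum_pos (I : finType) (P : pred I) (F : I -> nat) :
  0 < \sum_(i | P i) F i -> exists2 i, P i & 0 < F i.
Proof.
case: (boolP [exists i, P i && (0 < F i)]) => [/existsP [i /andP [pi fi]]|/existsPn hn].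
  by exists i.
rewrite big1 // => i pi; have := hn i; rewrite pi /=; lia.
Qed.

Lemma sum_in_eq1 (I : finType) (S : {set I}) (c : I) (F : I -> nat) : c \in S ->
  \sum_(x in S) ((x == c) * F x) = F c.
Proof.
move=> cS; rewrite (bigD1 c) //= eqxx mul1n big1 ?addn0 // => x /andP [_ /negbTE ->].
by rewrite mul0n.
Qed.

Section Main.
Variables (k : nat) (T : finType) (A : {set star T}).
Hypotheses (k3 : 3 <= k) (kodd : odd k) (cT : #|T| = 3 * k + 1)
  (hA : partial_star_design k A) (cA : #|A| = 4) (nr : ~ reducible k A).

Lemma centre_leaf x : 0 < ca A x -> 0 < cl A x.
Proof.
move=> hc; case: (posnP (cl A x)) => // h0; exfalso; apply: nr; split.
- by rewrite cT modnMDl.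
- rewrite cA /u cT modnMDl eqxx /= addnK mulnA mulnK; last by lia.
  by [].
- exists x; split; first by apply: ca_pos.
  by apply: cl_zero.
Qed.

Lemma degA_le x : degA A x <= 3 * k.
Proof. have := degL_eq A x; rewrite cT; lia. Qed.

Definition bad x := 3 * k + 2 <= 2 * degA A x.

Lemma bad_cases x : bad x -> ca A x = 2 \/ (ca A x = 1 /\ cl A x = 3).
Proof.
rewrite /bad (degA_eq hA) => hb.
have le := ca_cl_le hA x; rewrite cA in le.
have dle := degA_le x; rewrite (degA_eq hA) in dle.
have cp := @centre_leaf x.
move: hb le dle cp; case: (ca A x) => [|[|[|[|[|a]]]]] /=; lia.
Qed.

Lemma ca_one x : ca A x = 1 -> cl A x = 3 ->
  forall s, s \in A -> (centre s == x) + (x \in leaves s) = 1.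
Proof.
move=> h1 h3; apply: all_one => //.
  move=> s sA; have := cnotL hA sA.
  case: (centre s =P x) => [->|_] /=; first by move/negbTE => ->.
  by case: (x \in leaves s).
by rewrite big_split /= -/(ca A x) -/(cl A x) h1 h3 cA.
Qed.

Lemma no13 x w : x != w -> ca A x = 1 -> cl A x = 3 -> bad w -> False.
Proof.
move=> nxw h1 h3 bw.
have allx := ca_one h1 h3.
have [t tA ct] : exists2 t, t \in A & centre t = w.
  by apply: ca_pos; case: (bad_cases bw) => [->|[-> _]].
have xt : x \in leaves t.
  have := allx t tA; rewrite ct (eq_sym w x) (negbTE nxw) /=; by case: (x \in leaves t).
case: (bad_cases bw) => [ca2|[ca1 cl3]].
  have : 0 < \sum_(s in A | s != t) (centre s == w : nat).
    by move: ca2; rewrite /ca (bigD1 t) //= ct eqxx; lia.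
  move/sum_pos => [t' /andP [t'A nt't] hc].
  have ct' : centre t' = w by move: hc; case: eqP.
  have xt' : x \in leaves t'.
    have := allx t' t'A; rewrite ct' (eq_sym w x) (negbTE nxw) /=; by case: (x \in leaves t').
  have := Fd hA tA t'A xt xt'; rewrite ct ct' => /(_ erefl) ett'.
  by rewrite ett' eqxx in nt't.
have alw := ca_one ca1 cl3.
have [s sA cs] : exists2 s, s \in A & centre s = x by apply: ca_pos; rewrite h1.
have ws : w \in leaves s.
  have := alw s sA; rewrite cs (negbTE nxw) /=; by case: (w \in leaves s).
by apply: (Fe hA tA sA xt cs); rewrite ct.
Qed.

Lemma no22 x w : x != w -> ca A x = 2 -> ca A w = 2 -> False.
Proof.
move=> nxw hx hw.
have all2 : forall s, s \in A -> (centre s == x) + (centre s == w) = 1.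
  apply: all_one => //.
    move=> s sA; case: (centre s =P x) => [->|_] /=; last by case: (centre s == w).
    by rewrite (negbTE nxw).
  by rewrite big_split /= -/(ca A x) -/(ca A w) hx hw cA.
have [s sA xs] := cl_pos (@centre_leaf x ltac:(by rewrite hx)).
have [t tA wt] := cl_pos (@centre_leaf w ltac:(by rewrite hw)).
have cs : centre s = w.
  have := all2 s sA; have := cnotL hA sA; case: (centre s =P x) => [->|_]; first by rewrite xs.
  by case: (centre s =P w).
have ct : centre t = x.
  have := all2 t tA; have := cnotL hA tA; case: (centre t =P w) => [->|_]; first by rewrite wt.
  by case: (centre t =P x).
by apply: (Fe hA sA tA xs ct); rewrite cs.
Qed.

Lemma two_bad x w : x != w -> bad x -> bad w -> False.
Proof.
move=> nxw bx bw.
case: (bad_cases bx) => [x2|[x1 x3]]; last by apply: (no13 nxw x1 x3 bw).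
case: (bad_cases bw) => [w2|[w1 w3]]; last by apply: (no13 (ltac:(by rewrite eq_sym) : w != x) w1 w3 bx).
exact: (no22 nxw x2 w2).
Qed.


Lemma main : completable k A.
Proof.
have [m km] : exists m, k = 2 * m + 1.
  by exists k./2; have := odd_double_half k; rewrite kodd -muln2 /=; lia.
have m1 : 1 <= m by lia.
have [x0 _] : exists x0 : T, true.
  have : 0 < #|T| by rewrite cT addn1.
  by case/card_gt0P => x _; exists x.
case: (@arg_maxnP T x0 predT (degA A) isT) => z _ zmax.
have [s0 s0A] : exists s0, s0 \in A.
  have : 0 < #|A| by rewrite cA.
  by case/card_gt0P => s sA; exists s.
pose c0 := centre s0.
have cac0 : 0 < ca A c0 by rewrite /ca (bigD1 s0) //= eqxx.
have clc0 := centre_leaf cac0.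
have dc0 : k + 1 <= degA A c0 by rewrite (degA_eq hA); nia.
have dz : k + 1 <= degA A z by apply: leq_trans dc0 (zmax c0 isT).
have hz : forall x, x != z -> 2 * degA A x <= 3 * k + 1.
  move=> x nxz; rewrite leqNgt; apply/negP => hx.
  have := zmax x isT => hxz.
  by apply: (two_bad nxz); rewrite /bad; lia.
pose Q := [set x | 2 * degA A x <= k + 1].
have zQ : z \notin Q by rewrite inE; lia.
have sumA : \sum_x degA A x = 8 * k.
  rewrite (eq_bigr _ (fun x _ => degA_eq hA x)) big_split /= -big_distrr /=.
  rewrite (sum_ca A) (sum_cl hA) cA; lia.
have cQ : 3 * m - 1 <= #|Q|.
  pose Bs := ~: Q.
  have c0B : c0 \in Bs by rewrite !inE; lia.
  have low : (m + 2) * #|Bs| + m <= \sum_(x in Bs) degA A x.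
    have e : \sum_(x in Bs) ((m + 2) + (x == c0) * m) = (m + 2) * #|Bs| + m.
      by rewrite big_split /= sum_nat_const sum_in_eq1 // mulnC.
    rewrite -e; apply: leq_sum => x xB.
    move: xB; rewrite !inE -ltnNge => xB.
    case: (x =P c0) => [->|_]; lia.
  have up : \sum_(x in Bs) degA A x <= 8 * k.
    rewrite -sumA [X in _ <= X](bigID (fun x => x \in Bs)) /=; exact: leq_addr.
  have := cardsC Q; rewrite cT -/Bs => cB.
  nia.
have [X [XQ cX]] := subset_card cQ.
have zX : z \notin X by apply: contra zQ; apply: (subsetP XQ).
have XQ' : forall x, x \in X -> 2 * degA A x <= k + 1.
  by move=> x /(subsetP XQ); rewrite inE.
pose o x := if x == z then 0 else if x \in X then 2 * k else k.
have sumdeg : \sum_x deg (adjL A) x + 8 * k = 3 * k * (3 * k + 1).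
  rewrite -sumA -big_split /= (eq_bigr _ (fun x _ => degL_eq A x)) cT.
  rewrite sum_nat_const cT; lia.
have sumo : oS o setT = k * (3 * k) + k * (3 * m - 1).
  rewrite /oS (eq_bigl (fun x => true)); last by move=> x; rewrite inE.
  have -> : \sum_x o x = \sum_x (k * (x != z) + k * (x \in X)).
    apply: eq_bigr => x _; rewrite /o; case: (x =P z) => [->|_] /=.
      by rewrite (negbTE zX) muln0.
    by case: (x \in X); rewrite /= ?muln0 ?muln1 ?addn0 //; lia.
  rewrite big_split /= -!big_distrr /= sum_mem cX.
  have -> : \sum_x ((x != z) : nat) = #|T|.-1.
    rewrite -(cardC1 z) -sum1_card [RHS]big_mkcond /=.
    by apply: eq_bigr => x _; rewrite !inE; case: (x != z).
  by rewrite cT addn1.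
have h2o : 2 * oS o setT = \sum_x deg (adjL A) x.
  move: sumdeg; rewrite sumo km; nia.
have oz : o z = 0 by rewrite /o eqxx.
have ok : forall x, x != z -> k <= o x.
  by move=> x nxz; rewrite /o (negbTE nxz); case: (x \in X); lia.
have odeg : forall x, x != z -> 2 * o x + (k - 1) <= 2 * deg (adjL A) x.
  move=> x nxz; have := degL_eq A x; rewrite cT => e; have := hz x nxz.
  rewrite /o (negbTE nxz); case xX: (x \in X); last by lia.
  by have := XQ' x xX; lia.
have hS := cond_F (adjL_sym A) (adjL_irr A) cT h2o oz ok odeg.
have eSo : eS (adjL A) setT = oS o setT.
  have := eS_double setT (adjL_sym A) (adjL_irr A).
  rewrite (eq_bigl (fun x => true)); last by move=> x; rewrite inE.
  rewrite (eq_bigr _ (fun x _ => (eq_bigl (fun y => true) _ (fun y => in_setT y)))).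
  rewrite -/(deg (adjL A) _) -h2o; lia.
have [D [D1 D2 D3 D4]] := @hakimi T (oS o setT) (adjL A) o (adjL_sym A) (adjL_irr A) eSo erefl hS.
apply: (build hA (b := fun x => if x == z then 0 else if x \in X then 2 else 1)) D1 D2 D3 _.
move=> x; rewrite D4 /o; case: (x == z); case: (x \in X); lia.
Qed.

End Main.

Unset Implicit Arguments.

Theorem lemma11 (k : nat) (T : finType) (A : {set star T}) :
  3 <= k -> odd k -> #|T| = 3 * k + 1 ->
  partial_star_design k A -> #|A| = 4 -> ~ reducible k A ->
  completable k A.
Proof. move=> *; exact: main. Qed.
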